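(* Let $\lambda>1$, $s'\in(0,1]$, $r\in\mathbb{R}$, $a=r+\ln s'$, and $0<b\le\frac{\lambda-1}{\lambda}e^{1/(\lambda-1)}-1$ with $(\lambda-1)[1-\ln(\lambda-1)+\ln(b+1)]\le a\le\lambda-(\lambda-1)\ln\lambda$. Let $x^*$ be the smallest positive solution of $x=x^\lambda e^{a-(b+1)x}$. For the system $x_{n+1}=s'y_n$, $y_{n+1}=x_n^{\lambda}e^{r-bx_{n+1}-x_n}$ ($n\ge0$) on $[0,\infty)^2$, let $E$ be the set of initial points $(x_0,y_0)\in[0,\infty)^2$ whose orbit converges to $(0,0)$, and let $E_0$ be the connected component of $E$ containing $(0,0)$. Then $E_0\subsetneq[0,x^* )\times[0,x^*/s')$. *)

(* Defs.v *)
From Stdlib Require Import Reals.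
Open Scope R_scope.

Definition rpow (x lam : R) : R := if Req_EM_T x 0 then 0 else Rpower x lam.

Definition F (lam s' r b : R) (p : R * R) : R * R :=
  let (x, y) := p in
  (s' * y, rpow x lam * exp (r - b * (s' * y) - x)).

Definition orbit (lam s' r b : R) (p : R * R) (n : nat) : R * R :=
  Nat.iter n (F lam s' r b) p.

Definition basinE (lam s' r b : R) (p : R * R) : Prop :=
  0 <= fst p /\ 0 <= snd p /\
  Un_cv (fun n => fst (orbit lam s' r b p n)) 0 /\
  Un_cv (fun n => snd (orbit lam s' r b p n)) 0.

Definition open2 (U : R * R -> Prop) : Prop :=
  forall z, U z -> exists eps, 0 < eps /\
    forall w, Rabs (fst w - fst z) < eps -> Rabs (snd w - snd z) < eps -> U w.

Definition connected2 (S : R * R -> Prop) : Prop :=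
  forall U V, open2 U -> open2 V ->
    (forall z, S z -> U z \/ V z) ->
    (forall z, ~ (S z /\ U z /\ V z)) ->
    (forall z, ~ (S z /\ U z)) \/ (forall z, ~ (S z /\ V z)).

Definition component2 (A : R * R -> Prop) (p : R * R) (z : R * R) : Prop :=
  exists C, connected2 C /\ (forall w, C w -> A w) /\ C p /\ C z.

(* Main.v *)
Require Import Defs.
From Stdlib Require Import Reals Lra Lia.
Open Scope R_scope.

Lemma exple (x y : R) : x <= y -> exp x <= exp y.
Proof. intros H; destruct (Rle_lt_or_eq_dec _ _ H) as [H1|H1].
  apply Rlt_le, exp_increasing; auto. subst; lra. Qed.

Lemma L1 (w : R) : 0 < w -> 1 + ln w <= w.
Proof. intros Hw. pose proof (exp_ineq1_le (ln w)). rewrite exp_ln in H; auto. Qed.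

Lemma L2 (u v : R) : 0 < u -> 0 < v -> 1 - u / v <= ln v - ln u.
Proof. intros Hu Hv. assert (Hq : 0 < u / v) by (apply Rdiv_lt_0_compat; auto).
  pose proof (L1 _ Hq). unfold Rdiv in *. rewrite ln_mult in H; auto.
  rewrite ln_Rinv in H; auto. lra. apply Rinv_0_lt_compat; auto. Qed.

Lemma mono (lam u v : R) : 0 < u -> u <= v -> v <= lam ->
  lam * ln u - u <= lam * ln v - v.
Proof. intros Hu Huv Hvl. assert (Hv : 0 < v) by lra.
  pose proof (L2 u v Hu Hv).
  set (t := u / v) in *. assert (Ht : t * v = u) by (unfold t; field; lra).
  assert (t <= 1). { unfold t. apply (Rmult_le_reg_r v); auto. unfold Rdiv.
    rewrite Rmult_assoc, Rinv_l; lra. }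
  assert (lam * (1 - t) <= lam * (ln v - ln u)) by (apply Rmult_le_compat_l; lra).
  nra. Qed.

Lemma gmax (lam u : R) : 0 < u -> 0 < lam -> lam * ln u - u <= lam * ln lam - lam.
Proof. intros Hu Hl. pose proof (L2 u lam Hu Hl).
  assert (lam * (1 - u/lam) <= lam * (ln lam - ln u)) by (apply Rmult_le_compat_l; lra).
  assert (lam * (1 - u/lam) = lam - u) by (field; lra). lra. Qed.

Lemma rpow_pos (x lam : R) : 0 < x -> rpow x lam = exp (lam * ln x).
Proof. intros Hx. unfold rpow. destruct (Req_EM_T x 0); [lra|reflexivity]. Qed.

Lemma rpow0 (lam : R) : rpow 0 lam = 0.
Proof. unfold rpow. destruct (Req_EM_T 0 0); [reflexivity|lra]. Qed.

Lemma key (lam s' r a b x z : R) : 0 < x -> 0 < s' -> a = r + ln s' ->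
  s' * (rpow x lam * exp (r - b * z - x)) = exp (lam * ln x + a - b * z - x).
Proof. intros Hx Hs Ha. rewrite rpow_pos; auto. subst a.
  replace (lam * ln x + (r + ln s') - b * z - x) with (ln s' + (lam * ln x + (r - b * z - x))) by ring.
  rewrite !exp_plus, exp_ln; auto. Qed.

Lemma iterS {A} (f : A -> A) n x : Nat.iter (S n) f x = f (Nat.iter n f x).
Proof. reflexivity. Qed.

Definition Pinv (lam s' xs : R) (p : R * R) : Prop :=
  (xs <= fst p <= lam /\ 0 <= s' * snd p <= xs) \/
  (0 <= fst p <= xs /\ xs <= s' * snd p <= lam).

Lemma step (lam s' r a b xs : R) (hlam : 1 < lam) (hs1 : 0 < s')
  (ha : a = r + ln s') (hb1 : 0 < b)
  (ha2 : a <= lam - (lam - 1) * ln lam) (hxs_pos : 0 < xs)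
  (hxl : xs <= lam)
  (hxsl : ln xs = lam * ln xs + a - (b + 1) * xs) (p : R * R) :
  Pinv lam s' xs p -> Pinv lam s' xs (F lam s' r b p).
Proof.
  destruct p as [x y]. unfold Pinv, F; simpl.
  intros [[[H1 H2] [H3 H4]] | [[H1 H2] [H3 H4]]].
  - assert (Hx : 0 < x) by lra. rewrite key with (a := a); auto.
    assert (0 <= b * (s' * y)) by nra.
    assert (b * (s' * y) <= b * xs) by nra.
    pose proof (mono lam xs x hxs_pos H1 H2).
    pose proof (gmax lam x Hx ltac:(lra)).
    right. split; [lra|]. split.
    + apply Rle_trans with (exp (ln xs)); [rewrite exp_ln; lra|]. apply exple. lra.
    + apply Rle_trans with (exp (ln lam)); [|rewrite exp_ln; lra]. apply exple. nra.
  - left. split; [lra|]. destruct (Req_EM_T x 0) as [e|ne].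
    + subst. rewrite rpow0. lra.
    + assert (Hx : 0 < x) by lra. rewrite key with (a := a); auto.
      assert (b * xs <= b * (s' * y)) by nra.
      pose proof (mono lam x xs Hx H2 hxl).
      split. apply Rlt_le, exp_pos.
      apply Rle_trans with (exp (ln xs)); [|rewrite exp_ln; lra]. apply exple. lra.
Qed.

Lemma open_U (xs c : R) : open2 (fun w => fst w < xs /\ snd w < c).
Proof. intros z [H1 H2]. exists (Rmin (xs - fst z) (c - snd z)). split.
  apply Rmin_pos; lra. intros w Hw1 Hw2.
  pose proof (Rmin_l (xs - fst z) (c - snd z)). pose proof (Rmin_r (xs - fst z) (c - snd z)).
  apply Rabs_def2 in Hw1. apply Rabs_def2 in Hw2. lra. Qed.

Lemma open_V (xs c : R) : open2 (fun w => xs < fst w \/ c < snd w).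
Proof. intros z [H|H].
  - exists (fst z - xs). split; [lra|]. intros w Hw1 _. apply Rabs_def2 in Hw1. lra.
  - exists (snd z - c). split; [lra|]. intros w _ Hw2. apply Rabs_def2 in Hw2. lra. Qed.

Theorem mainTheorem12 (lam s' r a b xs : R)
  (hlam : 1 < lam) (hs1 : 0 < s') (hs2 : s' <= 1)
  (ha : a = r + ln s')
  (hb1 : 0 < b) (hb2 : b <= (lam - 1) / lam * exp (1 / (lam - 1)) - 1)
  (ha1 : (lam - 1) * (1 - ln (lam - 1) + ln (b + 1)) <= a)
  (ha2 : a <= lam - (lam - 1) * ln lam)
  (hxs_pos : 0 < xs)
  (hxs_sol : xs = rpow xs lam * exp (a - (b + 1) * xs))
  (hxs_min : forall x, 0 < x -> x = rpow x lam * exp (a - (b + 1) * x) -> xs <= x) :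
  (forall z, component2 (basinE lam s' r b) (0, 0) z ->
     0 <= fst z < xs /\ 0 <= snd z < xs / s') /\
  (exists z, 0 <= fst z < xs /\ 0 <= snd z < xs / s' /\
     ~ component2 (basinE lam s' r b) (0, 0) z).
Proof.
  assert (hxsl : ln xs = lam * ln xs + a - (b + 1) * xs).
  { rewrite hxs_sol at 1. rewrite rpow_pos; auto. rewrite <- exp_plus, ln_exp. ring. }
  assert (hxl : xs <= lam).
  { destruct (Rle_lt_dec xs lam) as [h|h]; auto. exfalso.
    pose proof (L2 xs lam hxs_pos ltac:(lra)).
    assert ((lam - 1) * (1 - xs / lam) <= (lam - 1) * (ln lam - ln xs)) by (apply Rmult_le_compat_l; lra).
    assert (Hq : xs / lam * lam = xs) by (field; lra).
    assert (1 < xs / lam). { apply (Rmult_lt_reg_r lam); lra. }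
    assert (0 < b * xs) by nra. nra. }
  split.
  - intros z [C [HC [HCE [HC0 HCz]]]].
    assert (Hnot : forall w, basinE lam s' r b w -> ~ ((fst w <= xs /\ snd w <= xs / s') /\
              (fst w = xs \/ snd w = xs / s'))).
    { intros [x y] [Hx [Hy [Hc1 Hc2]]] [[Hb1 Hb2] Hb3]. simpl in *.
      assert (Hsy : s' * (xs / s') = xs) by (field; lra).
      assert (HP : forall n, Pinv lam s' xs (orbit lam s' r b (x, y) n)).
      { induction n.
        - simpl. unfold Pinv; simpl. destruct Hb3 as [e|e].
          + left. split; [lra|]. split. nra.
            rewrite <- Hsy. apply Rmult_le_compat_l; lra.
          + right. subst y. rewrite Hsy. lra.
        - unfold orbit in *. simpl. apply step with (a := a); auto. }
      destruct (Hc1 xs hxs_pos) as [N1 HN1].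
      destruct (Hc2 (xs / s') ltac:(apply Rdiv_lt_0_compat; lra)) as [N2 HN2].
      specialize (HN1 (max N1 N2) ltac:(lia)). specialize (HN2 (max N1 N2) ltac:(lia)).
      specialize (HP (max N1 N2)). unfold R_dist in *. rewrite Rminus_0_r in *.
      destruct (orbit lam s' r b (x, y) (max N1 N2)) as [u v]. unfold Pinv in HP; simpl in *.
      apply Rabs_def2 in HN1. apply Rabs_def2 in HN2.
      assert (s' * v < xs). { rewrite <- Hsy. apply Rmult_lt_compat_l; lra. }
      lra. }
    assert (Hxs' : 0 < xs / s') by (apply Rdiv_lt_0_compat; lra).
    destruct (HC _ _ (open_U xs (xs / s')) (open_V xs (xs / s'))) as [H|H].
    + intros w Hw. pose proof (HCE w Hw) as Hew. pose proof (Hnot w Hew).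
      destruct (Rlt_le_dec xs (fst w)); [right; auto|].
      destruct (Rlt_le_dec (xs / s') (snd w)); [right; auto|].
      destruct (Req_dec (fst w) xs); [exfalso; apply H; tauto|].
      destruct (Req_dec (snd w) (xs / s')); [exfalso; apply H; tauto|].
      left. lra.
    + intros w [_ [[H1 H2] [H3|H3]]]; lra.
    + exfalso. apply (H (0,0)). simpl. repeat split; auto; lra.
    + destruct (HCE z HCz) as [Hz1 [Hz2 _]].
      assert (HU : (fst z < xs /\ snd z < xs / s') \/ (xs < fst z \/ xs / s' < snd z)).
      { destruct (Rlt_le_dec xs (fst z)); [right; auto|].
        destruct (Rlt_le_dec (xs / s') (snd z)); [right; auto|].
        pose proof (Hnot z (HCE z HCz)).
        destruct (Req_dec (fst z) xs); [exfalso; apply H0; tauto|].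
        destruct (Req_dec (snd z) (xs / s')); [exfalso; apply H0; tauto|].
        left. lra. }
      destruct HU as [HU|HU]; [lra|]. exfalso. apply (H z). tauto.
  - (* period-2 point *)
    set (k := fun t => (lam - 1) * t + a - exp t).
    assert (Hk : continuity k) by (unfold k; reg).
    set (t1 := Rmin (ln xs - 1) (- Rabs a / (lam - 1))).
    assert (Ht1 : t1 < ln xs) by (pose proof (Rmin_l (ln xs - 1) (- Rabs a / (lam - 1))); unfold t1; lra).
    assert (Hk1 : k t1 < 0).
    { unfold k. pose proof (exp_pos t1). pose proof (Rmin_r (ln xs - 1) (- Rabs a / (lam - 1))).
      fold t1 in H0.
      assert ((lam - 1) * t1 <= (lam - 1) * (- Rabs a / (lam - 1))) by (apply Rmult_le_compat_l; lra).
      assert ((lam - 1) * (- Rabs a / (lam - 1)) = - Rabs a) by (field; lra).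
      pose proof (Rle_abs a). lra. }
    assert (Hk2 : 0 < k (ln xs)).
    { unfold k. rewrite exp_ln; auto. nra. }
    destruct (IVT k t1 (ln xs) Hk Ht1 Hk1 Hk2) as [t0 [[Ht0a Ht0b] Ht0]].
    assert (Ht0c : t0 < ln xs).
    { destruct (Rle_lt_or_eq_dec _ _ Ht0b); auto. subst t0. lra. }
    set (u := exp t0).
    assert (Hu : 0 < u) by apply exp_pos.
    assert (Hux : u < xs) by (rewrite <- (exp_ln xs); auto; apply exp_increasing; auto).
    assert (Hut : ln u = t0) by (unfold u; apply ln_exp).
    exists (0, u / s'). simpl.
    assert (Hus : 0 < u / s') by (apply Rdiv_lt_0_compat; lra).
    assert (Hus2 : u / s' < xs / s') by (unfold Rdiv; apply Rmult_lt_compat_r; [apply Rinv_0_lt_compat|]; lra).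
    split; [lra|]. split; [lra|].
    intros [C [_ [HCE [_ HCz]]]]. destruct (HCE _ HCz) as [_ [_ [Hc1 _]]].
    assert (HF1 : F lam s' r b (0, u / s') = (u, 0)).
    { unfold F. rewrite rpow0. f_equal; field; lra. }
    assert (HF2 : F lam s' r b (u, 0) = (0, u / s')).
    { unfold F. f_equal. ring.
      apply (Rmult_eq_reg_l s'); [|lra].
      replace (s' * (u / s')) with u by (field; lra).
      replace (r - b * (s' * 0) - u) with (r - b * 0 - u) by ring.
      rewrite key with (a := a); auto.
      rewrite <- (exp_ln u) at 3; auto. f_equal. unfold k in Ht0. rewrite Hut. fold u in Ht0. lra. }
    assert (Hor : forall n, orbit lam s' r b (0, u / s') (2 * n) = (0, u / s')).
    { induction n. reflexivity.
      replace (2 * S n)%nat with (S (S (2 * n))) by lia.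
      unfold orbit in *. rewrite !iterS, IHn, HF1, HF2. reflexivity. }
    destruct (Hc1 u Hu) as [N HN]. specialize (HN (S (2 * N)) ltac:(lia)).
    unfold orbit in HN. rewrite iterS in HN. unfold orbit in Hor. rewrite Hor, HF1 in HN.
    unfold R_dist in HN. simpl in HN. rewrite Rminus_0_r, Rabs_right in HN; lra.
Qed.
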